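(* Consider any algorithm for two-party interactive communication over a public noisy channel that works with an unknown number $T$ of adversarial bit flips and that always terminates when there is no noise. Then any such algorithm succeeds with probability at most $1/2$ (against a suitable adversary).
   Context: Interactive communication: Alice and Bob, each holding their own input, wish to compute the transcript of a noise-free two-party protocol of length $L$ by communicating over a binary channel on which an adversary may flip bits; the total number of flips $T$ is not known to the parties. The channel is public: the adversary knows the algorithm and sees every bit sent over the channel, and can set the bits received by a party. Success means each party outputs the correct transcript of the input protocol. *)

(* Defs.v *)
From HB Require Import structures.
From mathcomp Require Import all_boot all_order all_algebra.
From mathcomp Require Import all_classical all_reals all_analysis.

Set Implicit Arguments.
Unset Strict Implicit.
Unset Printing Implicit Defensive.

Record protocol (X Y : Type) := Protocol {
  speaker : nat -> bool;                     (* true = Alice speaks *)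
  msgA    : nat -> X -> seq bool -> bool;
  msgB    : nat -> Y -> seq bool -> bool }.

Definition proto_round (X Y : Type) (pi : protocol X Y) (x : X) (y : Y)
  (tr : seq bool) (i : nat) : seq bool :=
  rcons tr (if speaker pi i then msgA pi i x tr else msgB pi i y tr).

Definition transcript (X Y : Type) (pi : protocol X Y) (L : nat)
  (x : X) (y : Y) : seq bool :=
  foldl (proto_round pi x y) [::] (iota 0 L).

(* A channel symbol is [option bool]: [Some b] = the bit b, [None] =   *)
(* silence.  At every time step each still-running party either sends *)
(* a symbol ([Send s]) or halts with an output transcript ([Halt o]).  *)
(* A party's decision depends on its private input, its private random *)
(* string (omega) and the sequence of symbols it has received so far.  *)
Inductive action := Send of option bool | Halt of seq bool.

Record algorithm (X Y OmA OmB : Type) := Algorithm {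
  alice : X -> OmA -> seq (option bool) -> action;
  bob   : Y -> OmB -> seq (option bool) -> action }.

(* A (deterministic) adversary sees the public channel: the sequence of *)
(* pairs (symbol sent by Alice, symbol sent by Bob) of all steps so far, *)
(* including the current one, and sets the pair                         *)
(* (symbol received by Alice, symbol received by Bob) of this step.     *)
Definition adversary := seq (option bool * option bool) -> option bool * option bool.

Definition noiseless : adversary :=
  fun pub => let: (sA, sB) := last (None, None) pub in (sB, sA).

(* Execution state: received history of Alice, her output (once halted),
   received history of Bob, his output, public history. *)
Definition exec_state :=
  (seq (option bool) * option (seq bool) * seq (option bool) * option (seq bool)
   * seq (option bool * option bool))%type.

Definition party_step (a : action) (o : option (seq bool))
  : option bool * option (seq bool) :=
  match o with
  | Some _ => (None, o)
  | None => match a with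
            | Send s => (s, None)
            | Halt out => (None, Some out)
            end
  end.

Definition exec_step (X Y OmA OmB : Type) (alg : algorithm X Y OmA OmB)
  (x : X) (y : Y) (wa : OmA) (wb : OmB) (adv : adversary)
  (st : exec_state) : exec_state :=
  let: (hA, oA, hB, oB, pub) := st in
  let: (sA, oA') := party_step (alice alg x wa hA) oA in
  let: (sB, oB') := party_step (bob alg y wb hB) oB in
  let pub' := rcons pub (sA, sB) in
  let: (rA, rB) := adv pub' in
  (rcons hA rA, oA', rcons hB rB, oB', pub').

Definition exec (X Y OmA OmB : Type) (alg : algorithm X Y OmA OmB)
  (x : X) (y : Y) (wa : OmA) (wb : OmB) (adv : adversary) (t : nat)
  : exec_state :=
  iter t (exec_step alg x y wa wb adv) ([::], None, [::], None, [::]).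

Definition outA (s : exec_state) : option (seq bool) := s.1.1.1.2.
Definition outB (s : exec_state) : option (seq bool) := s.1.2.
Definition pubh (s : exec_state) : seq (option bool * option bool) := s.2.

Definition terminates (X Y OmA OmB : Type) (alg : algorithm X Y OmA OmB)
  (x : X) (y : Y) (wa : OmA) (wb : OmB) (adv : adversary) : Prop :=
  exists t, outA (exec alg x y wa wb adv t) <> None /\
            outB (exec alg x y wa wb adv t) <> None.

Definition succeeds (X Y OmA OmB : Type) (alg : algorithm X Y OmA OmB)
  (x : X) (y : Y) (wa : OmA) (wb : OmB) (adv : adversary)
  (tr : seq bool) : Prop :=
  exists t, outA (exec alg x y wa wb adv t) = Some tr /\
            outB (exec alg x y wa wb adv t) = Some tr.

(* The adversary flips only finitely many symbols in this execution: from
   some step on, every received symbol equals the symbol the other party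
   sent at that step.  (At step t the public history has length t.+1.) *)
Definition finitely_many_flips (X Y OmA OmB : Type)
  (alg : algorithm X Y OmA OmB) (x : X) (y : Y) (wa : OmA) (wb : OmB)
  (adv : adversary) : Prop :=
  exists N, forall t, (N <= t)%N ->
    let pub := pubh (exec alg x y wa wb adv t.+1) in adv pub = noiseless pub.

(* Main.v *)
Require Import Defs.
From HB Require Import structures.
From mathcomp Require Import all_boot all_order all_algebra.
From mathcomp Require Import all_classical all_reals all_analysis.

Fixpoint ostat (f : seq (option bool) -> action) (n : nat) (h : seq (option bool)) : option (seq bool) :=
  match n with 0 => None | k.+1 => (party_step (f (take k h)) (ostat f k h)).2 end.
Definition ssend f h := (party_step (f h) (ostat f (size h) h)).1.

Definition simadv (X Y OmA OmB : Type) (alg : algorithm X Y OmA OmB)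
  (xS : X) (yS : Y) (wa0 : OmA) (wb0 : OmB) : adversary :=
  fun p => let q := take (size p).-1 p in
    (ssend (bob alg yS wb0) (map fst q), ssend (alice alg xS wa0) (map snd q)).

Arguments simadv {X Y OmA OmB} alg xS yS wa0 wb0 _.

Lemma ostat_take f k n h : (k <= n)%N -> ostat f k (take n h) = ostat f k h.
Proof.
elim: k => [//|k IH] Hk /=.
by rewrite take_takel ?IH // ltnW.
Qed.

Lemma take_rcons_size (T : Type) (s : seq T) x : take (size s) (rcons s x) = s.
Proof. by rewrite -cats1 take_size_cat. Qed.

Lemma ostat_rcons f h x : ostat f (size h) (rcons h x) = ostat f (size h) h.
Proof. by rewrite -(@ostat_take f (size h) (size h) (rcons h x) (leqnn _)) take_rcons_size. Qed.

Lemma NL (X Y OmA OmB : Type) (alg : algorithm X Y OmA OmB) x y wa wb t :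
  let E := exec alg x y wa wb noiseless t in
  [/\ E.1.1.2 = map fst E.2, E.1.1.1.1 = map snd E.2,
      E.1.2 = ostat (bob alg y wb) t E.1.1.2,
      E.1.1.1.2 = ostat (alice alg x wa) t E.1.1.1.1 & size E.2 = t].
Proof.
elim: t => [//|t IH].
have -> : exec alg x y wa wb noiseless t.+1 = exec_step alg x y wa wb noiseless (exec alg x y wa wb noiseless t) by [].
move: IH; case: (exec alg x y wa wb noiseless t) => [[[[hA oA] hB] oB] pub] /=.
case=> eB eA eoB eoA sz.
case eqa: (party_step (alice alg x wa hA) oA) => [sA oA'].
case eqb: (party_step (bob alg y wb hB) oB) => [sB oB'].
rewrite /noiseless last_rcons /=.
have szA : size hA = t by rewrite eA size_map.
have szB : size hB = t by rewrite eB size_map.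
split; rewrite ?map_rcons -?eA -?eB ?size_rcons ?sz //.
- by rewrite -{1}szB take_rcons_size -szB ostat_rcons szB -eoB eqb.
- by rewrite -{1}szA take_rcons_size -szA ostat_rcons szA -eoA eqa.
Qed.

Lemma coupled (X Y OmA OmB : Type) (alg : algorithm X Y OmA OmB)
  a b wa wb xS yS wa0 wb0 t :
  let R := exec alg a b wa wb (simadv alg xS yS wa0 wb0) t in
  let E0 := exec alg a yS wa wb0 noiseless t in
  let E1 := exec alg xS b wa0 wb noiseless t in
  [/\ R.1.1.1 = E0.1.1.1, R.1.1.2 = E1.1.1.2, R.1.2 = E1.1.2,
      map fst R.2 = map fst E0.2 & map snd R.2 = map snd E1.2].
Proof.
elim: t => [//|t IH].
have -> : exec alg a b wa wb (simadv alg xS yS wa0 wb0) t.+1 = exec_step alg a b wa wb (simadv alg xS yS wa0 wb0) (exec alg a b wa wb (simadv alg xS yS wa0 wb0) t) by [].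
have -> : exec alg a yS wa wb0 noiseless t.+1 = exec_step alg a yS wa wb0 noiseless (exec alg a yS wa wb0 noiseless t) by [].
have -> : exec alg xS b wa0 wb noiseless t.+1 = exec_step alg xS b wa0 wb noiseless (exec alg xS b wa0 wb noiseless t) by [].
have := @NL _ _ _ _ alg a yS wa wb0 t.
have := @NL _ _ _ _ alg xS b wa0 wb t.
move: IH.
case: (exec alg a b wa wb (simadv alg xS yS wa0 wb0) t) => [[[[hA oA] hB] oB] pub].
case: (exec alg a yS wa wb0 noiseless t) => [[[[hA0 oA0] hB0] oB0] pub0].
case: (exec alg xS b wa0 wb noiseless t) => [[[[hA1 oA1] hB1] oB1] pub1] /=.
case=> [[-> ->] -> -> e0 e1] [eB1 eA1 eoB1 eoA1 sz1] [eB0 eA0 eoB0 eoA0 sz0].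
have szp : size pub = t by rewrite -(size_map fst) e0 size_map.
case eqa: (party_step (alice alg a wa hA0) oA0) => [sA oA'].
case eqb: (party_step (bob alg b wb hB1) oB1) => [sB oB'].
case eqa1: (party_step (alice alg xS wa0 hA1) oA1) => [sA1 oA1'].
case eqb0: (party_step (bob alg yS wb0 hB0) oB0) => [sB0 oB0'].
rewrite /noiseless !last_rcons /simadv size_rcons /= !take_rcons_size.
rewrite /ssend e0 e1 -eB0 -eA1.
have szB0 : size hB0 = t by rewrite eB0 size_map.
have szA1 : size hA1 = t by rewrite eA1 size_map.
rewrite szB0 szA1 -eoB0 -eoA1 eqb0 eqa1 /=.
by rewrite !map_rcons e0 e1.
Qed.

Lemma step_info (X Y OmA OmB : Type) (alg : algorithm X Y OmA OmB)
  a b wa wb xS yS wa0 wb0 t :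
  let R := exec alg a b wa wb (simadv alg xS yS wa0 wb0) t in
  let E0 := exec alg a yS wa wb0 noiseless t in
  let E1 := exec alg xS b wa0 wb noiseless t in
  let p := pubh (exec alg a b wa wb (simadv alg xS yS wa0 wb0) t.+1) in
  simadv alg xS yS wa0 wb0 p =
    ((party_step (bob alg yS wb0 E0.1.1.2) E0.1.2).1,
     (party_step (alice alg xS wa0 E1.1.1.1.1) E1.1.1.1.2).1) /\
  noiseless p = ((party_step (bob alg b wb R.1.1.2) R.1.2).1,
                 (party_step (alice alg a wa R.1.1.1.1) R.1.1.1.2).1).
Proof.
have -> : exec alg a b wa wb (simadv alg xS yS wa0 wb0) t.+1 = exec_step alg a b wa wb (simadv alg xS yS wa0 wb0) (exec alg a b wa wb (simadv alg xS yS wa0 wb0) t) by [].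
have := @NL _ _ _ _ alg a yS wa wb0 t.
have := @NL _ _ _ _ alg xS b wa0 wb t.
have := @coupled _ _ _ _ alg a b wa wb xS yS wa0 wb0 t.
case: (exec alg a b wa wb (simadv alg xS yS wa0 wb0) t) => [[[[hA oA] hB] oB] pub].
case: (exec alg a yS wa wb0 noiseless t) => [[[[hA0 oA0] hB0] oB0] pub0].
case: (exec alg xS b wa0 wb noiseless t) => [[[[hA1 oA1] hB1] oB1] pub1] /=.
case=> [[-> ->] -> -> e0 e1] [eB1 eA1 eoB1 eoA1 sz1] [eB0 eA0 eoB0 eoA0 sz0].
have szp : size pub = t by rewrite -(size_map fst) e0 size_map.
case eqa: (party_step (alice alg a wa hA0) oA0) => [sA oA'].
case eqb: (party_step (bob alg b wb hB1) oB1) => [sB oB'].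
case eqadv: (simadv alg xS yS wa0 wb0 (rcons pub (sA, sB))) => [rA rB] /=.
rewrite /noiseless /pubh /= last_rcons; split => //.
rewrite -eqadv /simadv size_rcons /= take_rcons_size.
rewrite /ssend e0 e1 -eB0 -eA1.
have szB0 : size hB0 = t by rewrite eB0 size_map.
have szA1 : size hA1 = t by rewrite eA1 size_map.
by rewrite szB0 szA1 -eoB0 -eoA1.
Qed.

Lemma persistA (X Y OmA OmB : Type) (alg : algorithm X Y OmA OmB) x y wa wb adv t k o :
  outA (exec alg x y wa wb adv t) = Some o -> outA (exec alg x y wa wb adv (k + t)) = Some o.
Proof.
move=> H; elim: k => [//|k IH].
have -> : exec alg x y wa wb adv (k.+1 + t) = exec_step alg x y wa wb adv (exec alg x y wa wb adv (k + t)) by [].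
move: IH; case: (exec alg x y wa wb adv (k + t)) => [[[[hA oA] hB] oB] pub]; rewrite /outA /outB /= => ->.
rewrite /=; case: (party_step (bob alg y wb hB) oB) => [sB oB'] /=.
by case: (adv _).
Qed.

Lemma persistB (X Y OmA OmB : Type) (alg : algorithm X Y OmA OmB) x y wa wb adv t k o :
  outB (exec alg x y wa wb adv t) = Some o -> outB (exec alg x y wa wb adv (k + t)) = Some o.
Proof.
move=> H; elim: k => [//|k IH].
have -> : exec alg x y wa wb adv (k.+1 + t) = exec_step alg x y wa wb adv (exec alg x y wa wb adv (k + t)) by [].
move: IH; case: (exec alg x y wa wb adv (k + t)) => [[[[hA oA] hB] oB] pub]; rewrite /outA /outB /= => ->.
rewrite /=; case: (party_step (alice alg x wa hA) oA) => [sA oA'] /=.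
by case: (adv _).
Qed.

Lemma persistA' (X Y OmA OmB : Type) (alg : algorithm X Y OmA OmB) x y wa wb adv t t' o :
  (t <= t')%N -> outA (exec alg x y wa wb adv t) = Some o -> outA (exec alg x y wa wb adv t') = Some o.
Proof. by move=> /subnK <-; apply: persistA. Qed.

Lemma persistB' (X Y OmA OmB : Type) (alg : algorithm X Y OmA OmB) x y wa wb adv t t' o :
  (t <= t')%N -> outB (exec alg x y wa wb adv t) = Some o -> outB (exec alg x y wa wb adv t') = Some o.
Proof. by move=> /subnK <-; apply: persistB. Qed.

Lemma flips (X Y OmA OmB : Type) (alg : algorithm X Y OmA OmB)
  a b wa wb xS yS wa0 wb0 :
  terminates alg a yS wa wb0 noiseless -> terminates alg xS b wa0 wb noiseless ->
  finitely_many_flips alg a b wa wb (simadv alg xS yS wa0 wb0).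
Proof.
move=> [T0 [hA0 hB0]] [T1 [hA1 hB1]].
case eA0: (outA (exec alg a yS wa wb0 noiseless T0)) hA0 => [oa0|] // _.
case eB0: (outB (exec alg a yS wa wb0 noiseless T0)) hB0 => [ob0|] // _.
case eA1: (outA (exec alg xS b wa0 wb noiseless T1)) hA1 => [oa1|] // _.
case eB1: (outB (exec alg xS b wa0 wb noiseless T1)) hB1 => [ob1|] // _.
exists (maxn T0 T1) => t.
rewrite geq_max => /andP [l0 l1].
cbv zeta.
have [-> ->] := @step_info _ _ _ _ alg a b wa wb xS yS wa0 wb0 t.
have [c1 c2 c3 _ _] := @coupled _ _ _ _ alg a b wa wb xS yS wa0 wb0 t.
have := (@persistA' _ _ _ _ _ _ _ _ _ _ _ _ _ l0) eA0; have := (@persistB' _ _ _ _ _ _ _ _ _ _ _ _ _ l0) eB0.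
have := (@persistA' _ _ _ _ _ _ _ _ _ _ _ _ _ l1) eA1; have := (@persistB' _ _ _ _ _ _ _ _ _ _ _ _ _ l1) eB1.
rewrite /outA /outB c1 c2 c3.
by move=> -> -> -> ->.
Qed.
Local Open Scope classical_set_scope.

Definition act_enc (a : action) : option bool + seq bool :=
  match a with Send s => inl s | Halt o => inr o end.
Definition act_dec (e : option bool + seq bool) : action :=
  match e with inl s => Send s | inr o => Halt o end.
Lemma act_encK : cancel act_enc act_dec. Proof. by case. Qed.
HB.instance Definition _ := Countable.copy action (can_type act_encK).

Lemma count_preim d (T : measurableType d) (C : countType) (f : T -> C) :
  (forall c, measurable (f @^-1` [set c])) -> forall A : set C, measurable (f @^-1` A).
Proof.
move=> H A.
have -> : f @^-1` A = \bigcup_(n in [set: nat]) (fun n => match @unpickle C n with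
   Some c => if pselect (A c) then f @^-1` [set c] else set0 | None => set0 end) n.
  apply/seteqP; split => w /=.
    move=> Aw; exists (pickle (f w)) => //=; rewrite pickleK.
    by case: (pselect (A (f w))).
  case=> n _ /=; case: (unpickle n) => [c|] //.
  case: (pselect (A c)) => [Ac|_] //=; by move=> ->.
apply: bigcup_measurable => n _.
case: (unpickle n) => [c|] //; case: (pselect (A c)) => Ac /=; [exact: H | exact: measurable0].
Qed.


Definition algA (X Y OmB : Type) (alg : algorithm X Y unit OmB) := alg.

Lemma meas_execA d (OmA : measurableType d) (X Y OmB : Type)
  (alg : algorithm X Y OmA OmB) x y wb adv :
  (forall h a, measurable [set w : OmA | alice alg x w h = a]) ->
  forall t (v : exec_state), measurable [set w | exec alg x y w wb adv t = v].
Proof.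
move=> HA; elim => [|t IH] v.
  case: (eqVneq (([::], None, [::], None, [::]) : exec_state) v) => [<-|nv].
    have -> : [set w | exec alg x y w wb adv 0 = ([::], None, [::], None, [::])] = setT.
      by apply/seteqP; split.
    exact: measurableT.
  have -> : [set w | exec alg x y w wb adv 0 = v] = set0.
    by apply/seteqP; split => w //= e; move: nv; rewrite -e eqxx.
  exact: measurable0.
pose g := fun w => (exec alg x y w wb adv t, alice alg x w (exec alg x y w wb adv t).1.1.1.1).
pose F := fun p : exec_state * action =>
  exec_step (Algorithm (fun (_ : X) (_ : unit) (_ : seq (option bool)) => p.2) (bob alg)) x y tt wb adv p.1.
have -> : [set w | exec alg x y w wb adv t.+1 = v] = g @^-1` [set p | F p = v].
  apply/seteqP; split => w /=;
  rewrite /g /F /= -/(exec alg x y w wb adv t);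
  by case: (exec alg x y w wb adv t) => [[[[hA oA] hB] oB] pub].
apply: count_preim => -[s a].
have -> : g @^-1` [set (s, a)] = [set w | exec alg x y w wb adv t = s] `&` [set w | alice alg x w s.1.1.1.1 = a].
  apply/seteqP; split => w /=.
    by rewrite /g => -[-> ->].
  by rewrite /g => -[-> ->].
by apply: measurableI; [exact: IH | exact: HA].
Qed.

Lemma meas_execB d (OmB : measurableType d) (X Y OmA : Type)
  (alg : algorithm X Y OmA OmB) x y wa adv :
  (forall h a, measurable [set w : OmB | bob alg y w h = a]) ->
  forall t (v : exec_state), measurable [set w | exec alg x y wa w adv t = v].
Proof.
move=> HB; elim => [|t IH] v.
  case: (eqVneq (([::], None, [::], None, [::]) : exec_state) v) => [<-|nv].
    have -> : [set w | exec alg x y wa w adv 0 = ([::], None, [::], None, [::])] = setT.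
      by apply/seteqP; split.
    exact: measurableT.
  have -> : [set w | exec alg x y wa w adv 0 = v] = set0.
    by apply/seteqP; split => w //= e; move: nv; rewrite -e eqxx.
  exact: measurable0.
pose g := fun w => (exec alg x y wa w adv t, bob alg y w (exec alg x y wa w adv t).1.1.2).
pose F := fun p : exec_state * action =>
  exec_step (Algorithm (alice alg) (fun (_ : Y) (_ : unit) (_ : seq (option bool)) => p.2)) x y wa tt adv p.1.
have -> : [set w | exec alg x y wa w adv t.+1 = v] = g @^-1` [set p | F p = v].
  apply/seteqP; split => w /=;
  rewrite /g /F /= -/(exec alg x y wa w adv t);
  by case: (exec alg x y wa w adv t) => [[[[hA oA] hB] oB] pub].
apply: count_preim => -[s a].
have -> : g @^-1` [set (s, a)] = [set w | exec alg x y wa w adv t = s] `&` [set w | bob alg y w s.1.1.2 = a].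
  apply/seteqP; split => w /=.
    by rewrite /g => -[-> ->].
  by rewrite /g => -[-> ->].
by apply: measurableI; [exact: IH | exact: HB].
Qed.

Local Open Scope ereal_scope.

Section Main.
Variables (R : realType) (X Y : Type) (d1 d2 : measure_display)
  (OmA : measurableType d1) (OmB : measurableType d2)
  (PA : probability OmA R) (PB : probability OmB R)
  (alg : algorithm X Y OmA OmB) (wa0 : OmA) (wb0 : OmB).

Definition Aset (a : X) (yS : Y) (s : seq bool) : set OmA :=
  [set wa | exists t, outA (exec alg a yS wa wb0 noiseless t) = Some s].
Definition Bset (xS : X) (b : Y) (s : seq bool) : set OmB :=
  [set wb | exists t, outB (exec alg xS b wa0 wb noiseless t) = Some s].

Lemma succ_eq a b xS yS s :
  [set w : OmA * OmB | succeeds alg a b w.1 w.2 (simadv alg xS yS wa0 wb0) s]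
  = Aset a yS s `*` Bset xS b s.
Proof.
have eA : forall wa wb t, outA (exec alg a b wa wb (simadv alg xS yS wa0 wb0) t) =
    outA (exec alg a yS wa wb0 noiseless t).
  by move=> wa wb t; have [c1 _ _ _ _] := @coupled _ _ _ _ alg a b wa wb xS yS wa0 wb0 t; rewrite /outA c1.
have eB : forall wa wb t, outB (exec alg a b wa wb (simadv alg xS yS wa0 wb0) t) =
    outB (exec alg xS b wa0 wb noiseless t).
  by move=> wa wb t; have [_ _ c3 _ _] := @coupled _ _ _ _ alg a b wa wb xS yS wa0 wb0 t; rewrite /outB c3.
apply/seteqP; split => -[wa wb] /=.
  case=> t [h1 h2]; split; exists t; [by rewrite -(eA wa wb) | by rewrite -(eB wa wb)].
case=> [[t1 h1] [t2 h2]]; exists (maxn t1 t2); rewrite eA eB; split.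
  by apply: (@persistA' _ _ _ _ _ _ _ _ _ _ t1) => //; rewrite leq_maxl.
by apply: (@persistB' _ _ _ _ _ _ _ _ _ _ t2) => //; rewrite leq_maxr.
Qed.

Hypothesis HA : forall x h a, measurable [set w : OmA | alice alg x w h = a].
Hypothesis HB : forall y h a, measurable [set w : OmB | bob alg y w h = a].

Lemma measA a yS s : measurable (Aset a yS s).
Proof.
have -> : Aset a yS s = \bigcup_(t in [set: nat])
    ((fun wa => exec alg a yS wa wb0 noiseless t) @^-1` [set v | outA v = Some s]).
  by apply/seteqP; split => w /= [t]; [exists t | move=> _ ?; exists t].
apply: bigcup_measurable => t _; apply: count_preim => v.
exact: meas_execA.
Qed.

Lemma measB xS b s : measurable (Bset xS b s).
Proof.
have -> : Bset xS b s = \bigcup_(t in [set: nat])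
    ((fun wb => exec alg xS b wa0 wb noiseless t) @^-1` [set v | outB v = Some s]).
  by apply/seteqP; split => w /= [t]; [exists t | move=> _ ?; exists t].
apply: bigcup_measurable => t _; apply: count_preim => v.
exact: meas_execB.
Qed.

Lemma disjA a yS s1 s2 : s1 <> s2 -> Aset a yS s1 `&` Aset a yS s2 = set0.
Proof.
move=> ne; apply/seteqP; split => w //= [[t1 h1] [t2 h2]]; apply: ne.
have := (@persistA' _ _ _ _ _ _ _ _ _ _ _ (maxn t1 t2) _ (leq_maxl t1 t2) h1).
have := (@persistA' _ _ _ _ _ _ _ _ _ _ _ (maxn t1 t2) _ (leq_maxr t1 t2) h2).
by move=> -> [].
Qed.

Lemma disjB xS b s1 s2 : s1 <> s2 -> Bset xS b s1 `&` Bset xS b s2 = set0.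
Proof.
move=> ne; apply/seteqP; split => w //= [[t1 h1] [t2 h2]]; apply: ne.
have := (@persistB' _ _ _ _ _ _ _ _ _ _ _ (maxn t1 t2) _ (leq_maxl t1 t2) h1).
have := (@persistB' _ _ _ _ _ _ _ _ _ _ _ (maxn t1 t2) _ (leq_maxr t1 t2) h2).
by move=> -> [].
Qed.

End Main.

Import GRing.Theory Num.Theory.

Lemma half_choice d (T : measurableType d) (R : realType) (P : probability T R) (A1 A2 : set T) :
  measurable A1 -> measurable A2 -> A1 `&` A2 = set0 ->
  P A1 <= (2^-1)%:E \/ P A2 <= (2^-1)%:E.
Proof.
move=> m1 m2 dis.
case: (Order.TotalTheory.leP (P A1) (2^-1)%:E) => h1; first by left.
case: (Order.TotalTheory.leP (P A2) (2^-1)%:E) => h2; first by right.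
exfalso.
have mU : measurable (A1 `|` A2) by apply: measurableU.
have := @probability_le1 _ _ _ P _ mU.
rewrite measureU // => H.
have := lteD h1 h2; rewrite -EFinD.
have -> : (2^-1 + 2^-1 : R)%R = 1%R by rewrite [in RHS](splitr 1%R) div1r.
by move=> h; have := Order.POrderTheory.lt_le_trans h H; rewrite Order.POrderTheory.ltxx.
Qed.

Lemma prod_half d1 d2 (T1 : measurableType d1) (T2 : measurableType d2) (R : realType)
  (P1 : probability T1 R) (P2 : probability T2 R) (A : set T1) (B : set T2) :
  measurable A -> measurable B -> P1 A <= (2^-1)%:E \/ P2 B <= (2^-1)%:E ->
  (P1 \x P2) (A `*` B) <= (2^-1)%:E.
Proof.
move=> mA mB h; rewrite product_measure1E //.
case: h => h.
  by rewrite -[X in _ <= X]mule1; apply: lee_pmul => //; exact: probability_le1.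
by rewrite -[X in _ <= X]mul1e; apply: lee_pmul => //; exact: probability_le1.
Qed.

Theorem theorem6
  (R : realType) (X Y : Type) (pi : protocol X Y) (L : nat)
  (d1 d2 : measure_display) (OmA : measurableType d1) (OmB : measurableType d2)
  (PA : probability OmA R) (PB : probability OmB R)
  (alg : algorithm X Y OmA OmB) :
  (* the input protocol is not trivial (its transcript depends on the inputs) *)
  (exists x y x' y', transcript pi L x y <> transcript pi L x' y') ->
  (* the parties' strategies are measurable in their private randomness *)
  (forall x h a, measurable [set w : OmA | alice alg x w h = a]) ->
  (forall y h a, measurable [set w : OmB | bob alg y w h = a]) ->
  (* the algorithm always terminates when there is no noise *)
  (forall x y wa wb, terminates alg x y wa wb noiseless) ->
  exists adv : adversary, exists x : X, exists y : Y,
    (forall wa wb, finitely_many_flips alg x y wa wb adv) /\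
    (PA \x PB) [set w : OmA * OmB | succeeds alg x y w.1 w.2 adv (transcript pi L x y)]
      <= (2^-1)%:E.
Proof.
move=> [x [y [x' [y' ne]]]] HA HB Hterm.
have [wa0 _] : exists w : OmA, True.
  case: (pselect (exists w : OmA, True)) => // no; exfalso.
  have e : [set: OmA] = set0 by apply/seteqP; split => w // _; apply: no; exists w.
  have := probability_setT PA; rewrite e measure0 => -[] /eqP.
  by rewrite eq_sym oner_eq0.
have [wb0 _] : exists w : OmB, True.
  case: (pselect (exists w : OmB, True)) => // no; exfalso.
  have e : [set: OmB] = set0 by apply/seteqP; split => w // _; apply: no; exists w.
  have := probability_setT PB; rewrite e measure0 => -[] /eqP.
  by rewrite eq_sym oner_eq0.
pose adv := simadv alg x y' wa0 wb0.
have fl : forall a b wa wb, finitely_many_flips alg a b wa wb adv.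
  by move=> a b wa wb; apply: flips; apply: Hterm.
have key : forall a b, (PA (Aset _ _ _ _ _ _ alg wb0 a y' (transcript pi L a b)) <= (2^-1)%:E \/
    PB (Bset _ _ _ _ _ _ alg wa0 x b (transcript pi L a b)) <= (2^-1)%:E) ->
    (PA \x PB) [set w : OmA * OmB | succeeds alg a b w.1 w.2 adv (transcript pi L a b)]
      <= (2^-1)%:E.
  move=> a b h; rewrite /adv succ_eq; apply: prod_half => //.
    exact: measA.
  exact: measB.
case: (eqVneq (transcript pi L x y) (transcript pi L x y')) => [exy|nxy].
  have ne' : transcript pi L x y' <> transcript pi L x' y' by rewrite -exy.
  have [h|h] := @half_choice _ _ _ PB _ _ (measB _ _ _ _ _ _ alg wa0 HB x y' _) (measB _ _ _ _ _ _ alg wa0 HB x y' _)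
     (disjB _ _ _ _ _ _ alg wa0 x y' _ _ ne').
    by exists adv, x, y'; split => //; apply: key; right.
  by exists adv, x', y'; split => //; apply: key; right.
have [h|h] := @half_choice _ _ _ PA _ _ (measA _ _ _ _ _ _ alg wb0 HA x y' _) (measA _ _ _ _ _ _ alg wb0 HA x y' _)
   (disjA _ _ _ _ _ _ alg wb0 x y' _ _ (elimN eqP nxy)).
  by exists adv, x, y; split => //; apply: key; left.
by exists adv, x, y'; split => //; apply: key; left.
Qed.
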